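(* Let $\mathbf{X}$ be a finitely supported real random variable with $\mathbf{E}[\mathbf{X}]=0$ and $\mathrm{Var}[\mathbf{X}]=1$, and let $\lambda$ be the minimum probability that $\mathbf{X}$ puts on any point of its support. Suppose $f:\mathbb{R}^n\to\mathbb{R}$ is a multilinear polynomial of degree at most $d\ge1$ with $\|f\|_2=1$, and let $t_0:=(2e/\lambda)^d$. Then \[ \mathbf{E}_{\mathbf{x}\sim\mathbf{X}^{\otimes n}}\big[f(\mathbf{x})^2\cdot\mathbf{1}_{\{|f(\mathbf{x})|>t_0\}}\big]\le 0.52 . \]
   Context: $\|f\|_2=\mathbf{E}_{\mathbf{x}\sim\mathbf{X}^{\otimes n}}[f(\mathbf{x})^2]^{1/2}$, where $\mathbf{X}^{\otimes n}$ is a vector of $n$ i.i.d. copies of $\mathbf{X}$. *)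

(* Defs.v *)
From HB Require Import structures.
From mathcomp Require Import all_boot all_order all_algebra.
From mathcomp Require Import reals sequences exp.
Set Implicit Arguments. Unset Strict Implicit. Unset Printing Implicit Defensive.
Import Order.TTheory GRing.Theory Num.Theory.
Local Open Scope ring_scope.

(* A finitely supported real random variable X is given by its support
   points a : 'I_m -> R (pairwise distinct) and the probabilities
   p : 'I_m -> R (strictly positive, summing to 1). *)

Definition rv_mean (R : realType) (m : nat) (a p : 'I_m -> R) : R :=
  \sum_(i < m) p i * a i.

Definition rv_var (R : realType) (m : nat) (a p : 'I_m -> R) : R :=
  \sum_(i < m) p i * (a i - rv_mean a p) ^+ 2.

(* Expectation of g(x) for x ~ X^{(x) n}: x_i = a (w i) independently,
   with probability prod_i p (w i). *)
Definition prod_expect (R : realType) (m n : nat) (a p : 'I_m -> R)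
  (g : ('I_n -> R) -> R) : R :=
  \sum_(w : {ffun 'I_n -> 'I_m}) (\prod_(i < n) p (w i)) * g (fun i => a (w i)).

Definition L2norm (R : realType) (m n : nat) (a p : 'I_m -> R)
  (f : ('I_n -> R) -> R) : R :=
  Num.sqrt (prod_expect a p (fun x => f x ^+ 2)).

Definition multilinear_deg_le (R : realType) (n d : nat)
  (f : ('I_n -> R) -> R) : Prop :=
  exists c : {set 'I_n} -> R,
    (forall S : {set 'I_n}, (d < #|S|)%N -> c S = 0) /\
    forall x, f x = \sum_(S : {set 'I_n}) c S * \prod_(i in S) x i.

(* Main.v *)
Require Import Defs.
From HB Require Import structures.
From mathcomp Require Import all_boot all_order all_algebra.
From mathcomp Require Import reals sequences exp.
From mathcomp Require Import ring lra zify.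
From Stdlib Require Import FunctionalExtensionality.
Import Order.TTheory GRing.Theory Num.Theory.
Set Implicit Arguments. Unset Strict Implicit.
Local Open Scope ring_scope.

Lemma PE_ext (R : realType) (m n : nat) (a p : 'I_m -> R) (g1 g2 : ('I_n -> R) -> R) :
  (forall y, g1 y = g2 y) -> prod_expect a p g1 = prod_expect a p g2.
Proof. by move=> H; apply: eq_bigr => w _; rewrite H. Qed.

Lemma PE_add (R : realType) (m n : nat) (a p : 'I_m -> R) (g1 g2 : ('I_n -> R) -> R) :
  prod_expect a p (fun y => g1 y + g2 y) = prod_expect a p g1 + prod_expect a p g2.
Proof. by rewrite /prod_expect -big_split; apply: eq_bigr => w _; rewrite mulrDr. Qed.

Lemma PE_scale (R : realType) (m n : nat) (a p : 'I_m -> R) (k : R) (g : ('I_n -> R) -> R) :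
  prod_expect a p (fun y => k * g y) = k * prod_expect a p g.
Proof. by rewrite /prod_expect mulr_sumr; apply: eq_bigr => w _; rewrite mulrCA. Qed.

Lemma PE_sum (R : realType) (m n : nat) (a p : 'I_m -> R) (F : 'I_m -> ('I_n -> R) -> R) :
  prod_expect a p (fun y => \sum_(j < m) F j y) = \sum_(j < m) prod_expect a p (F j).
Proof.
rewrite /prod_expect exchange_big; apply: eq_bigr => w _; by rewrite mulr_sumr.
Qed.

Lemma PE_le (R : realType) (m n : nat) (a p : 'I_m -> R) (g1 g2 : ('I_n -> R) -> R) :
  (forall i, 0 <= p i) -> (forall y, g1 y <= g2 y) -> prod_expect a p g1 <= prod_expect a p g2.
Proof.
move=> p0 H; apply: ler_sum => w _; apply: ler_wpM2l => //.
by apply: prodr_ge0 => i _.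
Qed.

Lemma PE_ge0 (R : realType) (m n : nat) (a p : 'I_m -> R) (g : ('I_n -> R) -> R) :
  (forall i, 0 <= p i) -> (forall y, 0 <= g y) -> 0 <= prod_expect a p g.
Proof.
move=> p0 H; apply: sumr_ge0 => w _; apply: mulr_ge0 => //.
by apply: prodr_ge0 => i _.
Qed.

Lemma PE_const (R : realType) (m n : nat) (a p : 'I_m -> R) (k : R) :
  \sum_(i < m) p i = 1 -> prod_expect a p (fun _ : 'I_n -> R => k) = k.
Proof.
move=> ps; rewrite /prod_expect -mulr_suml mulrC.
rewrite -(bigA_distr_bigA (fun (_ : 'I_n) (j : 'I_m) => p j)) /=.
by rewrite ps big1 ?mulr1.
Qed.

Definition upd (R : realType) n (y : 'I_n -> R) (i : 'I_n) (v : R) : 'I_n -> R :=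
  fun k => if k == i then v else y k.

Definition wupd m n (w : {ffun 'I_n -> 'I_m}) (i : 'I_n) (j : 'I_m) : {ffun 'I_n -> 'I_m} :=
  [ffun k => if k == i then j else w k].

Lemma PE_cond (R : realType) (m n : nat) (a p : 'I_m -> R) (g : ('I_n -> R) -> R) (i : 'I_n) :
  \sum_(j < m) p j = 1 ->
  prod_expect a p g = \sum_(j < m) p j * prod_expect a p (fun y => g (upd y i (a j))).
Proof.
move=> ps.
pose F (w : {ffun 'I_n -> 'I_m}) := (\prod_(k < n | k != i) p (w k)) * g (fun k => a (w k)).
pose T (q : 'I_m * {ffun 'I_n -> 'I_m}) := p q.1 * (p (q.2 i) * F (wupd q.2 i q.1)).
have E1 : forall w j, (fun k => a (wupd w i j k)) = upd (fun k => a (w k)) i (a j).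
  by move=> w j; apply: functional_extensionality => k; rewrite /upd ffunE; case: (k == i).
have E2 : forall w j, \prod_(k < n | k != i) p (wupd w i j k) = \prod_(k < n | k != i) p (w k).
  by move=> w j; apply: eq_bigr => k /negbTE kn; rewrite ffunE kn.
have RHS : \sum_(j < m) p j * prod_expect a p (fun y => g (upd y i (a j))) = \sum_q T q.
  rewrite -(pair_bigA _ (fun j w => T (j, w))) /=; apply: eq_bigr => j _.
  rewrite /prod_expect mulr_sumr; apply: eq_bigr => w _.
  rewrite /T /F /= E1 E2 (bigD1 i) //= -mulrA.
  by [].
pose sig (q : 'I_m * {ffun 'I_n -> 'I_m}) := (q.2 i, wupd q.2 i q.1).
have sigK : involutive sig.
  case=> j w; rewrite /sig /= /wupd ffunE eqxx; congr (_, _).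
  by apply/ffunP => k; rewrite !ffunE; case: eqP => // ->.
rewrite RHS (reindex_inj (inv_inj sigK)) /=.
rewrite -(pair_bigA _ (fun j w => T (sig (j, w)))) /=.
have E3 : forall j w, T (sig (j, w)) = p j * (p (w i) * F w).
  move=> j w; rewrite /T /sig /= /wupd ffunE eqxx.
  have -> : [ffun k => if k == i then w i else [ffun k0 => if k0 == i then j else w k0] k] = w.
    by apply/ffunP => k; rewrite !ffunE; case: eqP => // ->.
  by rewrite mulrCA.
under eq_bigr do under eq_bigr do rewrite E3.
under eq_bigr do rewrite -mulr_sumr.
rewrite -mulr_suml ps mul1r /prod_expect; apply: eq_bigr => w _.
by rewrite /F (bigD1 i) //= -mulrA.
Qed.

Definition mpol (R : realType) n (c : {set 'I_n} -> R) (y : 'I_n -> R) : R :=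
  \sum_(S : {set 'I_n}) c S * \prod_(k in S) y k.
Definition cut1 (R : realType) n (c : {set 'I_n} -> R) (i : 'I_n) (S : {set 'I_n}) : R :=
  if i \in S then 0 else c S.
Definition cut2 (R : realType) n (c : {set 'I_n} -> R) (i : 'I_n) (S : {set 'I_n}) : R :=
  if i \in S then 0 else c (i |: S).

Lemma mpol_upd (R : realType) n (c : {set 'I_n} -> R) (i : 'I_n) (y : 'I_n -> R) (v : R) :
  mpol c (upd y i v) = mpol (cut1 c i) y + v * mpol (cut2 c i) y.
Proof.
rewrite /mpol (bigID (fun S : {set 'I_n} => i \in S)) /= addrC; congr (_ + _).
  rewrite [RHS](bigID (fun S : {set 'I_n} => i \in S)) /= [X in _ = X + _]big1 ?add0r; last first.
    by move=> S iS; rewrite /cut1 iS mul0r.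
  apply: eq_bigr => S /negbTE iS; rewrite /cut1 iS; congr (_ * _).
  apply: eq_bigr => k kS; rewrite /upd; case: eqP => // ki.
  by move: kS; rewrite ki iS.
rewrite [in RHS](bigID (fun S : {set 'I_n} => i \in S)) /= [X in _ = _ * (X + _)]big1 ?add0r; last first.
  by move=> S iS; rewrite /cut2 iS mul0r.
rewrite mulr_sumr.
rewrite (reindex_onto (fun S => i |: S) (fun S => S :\ i)) /=; last first.
  by move=> S iS; rewrite setD1K.
apply: eq_big => S.
  rewrite setU11 /=; apply/eqP/idP.
    by move=> <-; rewrite setD11.
  by move=> iS; rewrite setU1K.
move=> /andP [_ /eqP HS].
have iS : i \notin S by rewrite -HS setD11.
rewrite /cut2 (negbTE iS) big_setU1 //= /upd eqxx.
rewrite mulrCA; congr (_ * (_ * _)).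
apply: eq_bigr => k kS; case: eqP => // ki.
by move: kS; rewrite ki (negbTE iS).
Qed.

Lemma pt4 (R : realType) (m : nat) (a p : 'I_m -> R) (p0 : forall i, 0 <= p i)
  (ps : \sum_(j < m) p j = 1) (m0 : \sum_(j < m) p j * a j = 0)
  (m2 : \sum_(j < m) p j * a j ^+ 2 = 1) (e h : R) :
  \sum_(j < m) p j * (e + a j * h) ^+ 4 <=
  e ^+ 4 + 8 * (e ^+ 2 * h ^+ 2) + 3 * (\sum_(j < m) p j * a j ^+ 4) * h ^+ 4.
Proof.
have -> : e ^+ 4 + 8 * (e ^+ 2 * h ^+ 2) + 3 * (\sum_(j < m) p j * a j ^+ 4) * h ^+ 4 =
  e ^+ 4 * (\sum_(j < m) p j) + 4 * e ^+ 3 * h * (\sum_(j < m) p j * a j)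
  + 8 * e ^+ 2 * h ^+ 2 * (\sum_(j < m) p j * a j ^+ 2)
  + 3 * h ^+ 4 * (\sum_(j < m) p j * a j ^+ 4).
  by rewrite ps m0 m2; ring.
rewrite !mulr_sumr -!big_split /=; apply: ler_sum => j _.
have H : 0 <= p j * (a j * e * h - a j ^+ 2 * h ^+ 2) ^+ 2.
  by apply: mulr_ge0 => //; apply: sqr_ge0.
rewrite -subr_ge0.
set D := (X in 0 <= X).
have -> : D = 2 * (p j * (a j * e * h - a j ^+ 2 * h ^+ 2) ^+ 2) by rewrite /D; ring.
by apply: mulr_ge0.
Qed.

Lemma pt2 (R : realType) (m : nat) (a p : 'I_m -> R)
  (ps : \sum_(j < m) p j = 1) (m0 : \sum_(j < m) p j * a j = 0)
  (m2 : \sum_(j < m) p j * a j ^+ 2 = 1) (e h : R) :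
  \sum_(j < m) p j * (e + a j * h) ^+ 2 = e ^+ 2 + h ^+ 2.
Proof.
have -> : e ^+ 2 + h ^+ 2 =
  e ^+ 2 * (\sum_(j < m) p j) + 2 * e * h * (\sum_(j < m) p j * a j)
  + h ^+ 2 * (\sum_(j < m) p j * a j ^+ 2).
  by rewrite ps m0 m2; ring.
rewrite !mulr_sumr -!big_split /=; apply: eq_bigr => j _; ring.
Qed.

Lemma PE_CS (R : realType) (m n : nat) (a p : 'I_m -> R) (p0 : forall i, 0 <= p i)
  (u v : ('I_n -> R) -> R) :
  prod_expect a p (fun y => u y * v y) ^+ 2 <=
  prod_expect a p (fun y => u y ^+ 2) * prod_expect a p (fun y => v y ^+ 2).
Proof.
rewrite /prod_expect.
set W := fun w : {ffun 'I_n -> 'I_m} => \prod_(i < n) p (w i).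
set U := fun w : {ffun 'I_n -> 'I_m} => u (fun i => a (w i)).
set V := fun w : {ffun 'I_n -> 'I_m} => v (fun i => a (w i)).
have W0 : forall w, 0 <= W w by move=> w; apply: prodr_ge0.
have key : 0 <= \sum_w \sum_w' W w * W w' * (U w * V w' - U w' * V w) ^+ 2.
  apply: sumr_ge0 => w _; apply: sumr_ge0 => w' _.
  by apply: mulr_ge0; [apply: mulr_ge0|apply: sqr_ge0].
pose A := \sum_w W w * U w ^+ 2.
pose B := \sum_w W w * V w ^+ 2.
pose C := \sum_w W w * (U w * V w).
have EAB : A * B = \sum_w \sum_w' (W w * U w ^+ 2) * (W w' * V w' ^+ 2).
  by rewrite /A mulr_suml; apply: eq_bigr => w _; rewrite /B mulr_sumr.
have EBA : B * A = \sum_w \sum_w' (W w' * U w' ^+ 2) * (W w * V w ^+ 2).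
  by rewrite /B mulr_suml; apply: eq_bigr => w _; rewrite /A mulr_sumr; apply: eq_bigr => w' _; rewrite mulrC.
have ECC : C * C = \sum_w \sum_w' (W w * (U w * V w)) * (W w' * (U w' * V w')).
  by rewrite /C mulr_suml; apply: eq_bigr => w _; rewrite mulr_sumr.
have E : \sum_w \sum_w' W w * W w' * (U w * V w' - U w' * V w) ^+ 2 = A * B + B * A - 2 * (C * C).
  rewrite EAB EBA ECC mulr_sumr -big_split -sumrB /=; apply: eq_bigr => w _.
  rewrite mulr_sumr -big_split -sumrB /=; apply: eq_bigr => w' _; ring.
rewrite E in key.
rewrite -/A -/B -/C; lra.
Qed.

Lemma hyper (R : realType) (m n : nat) (a p : 'I_m -> R) (p0 : forall i, 0 <= p i)
  (ps : \sum_(j < m) p j = 1) (m0 : \sum_(j < m) p j * a j = 0)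
  (m2 : \sum_(j < m) p j * a j ^+ 2 = 1) (K : R)
  (K16 : 16%:R <= K) (KB : 3 * (\sum_(j < m) p j * a j ^+ 4) <= K)
  (s : seq 'I_n) : forall (d : nat) (c : {set 'I_n} -> R),
  (forall S : {set 'I_n}, ~~ (S \subset [set k in s]) -> c S = 0) ->
  (forall S : {set 'I_n}, (d < #|S|)%N -> c S = 0) ->
  prod_expect a p (fun y => mpol c y ^+ 4) <=
  K ^+ d * prod_expect a p (fun y => mpol c y ^+ 2) ^+ 2.
Proof.
have K1 : 1 <= K by lra.
elim: s => [|i s IH] d c hsub hdeg.
  have Hc : forall y, mpol c y = c set0.
    move=> y; rewrite /mpol (bigD1 set0) //= big_set0 mulr1 big1 ?addr0 //.
    move=> S SN; rewrite hsub ?mul0r //; apply/negP => /subsetP H; move/negP: SN; apply.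
    apply/eqP/setP => k; rewrite inE; apply/negP => kS.
    by have := H k kS; rewrite inE.
  rewrite (PE_ext _ _ (fun y => congr1 (fun z => z ^+ 4) (Hc y))).
  rewrite (PE_ext _ _ (fun y => congr1 (fun z => z ^+ 2) (Hc y))).
  rewrite !PE_const // -exprM.
  by apply: ler_peMl; [apply: exprn_even_ge0 | apply: exprn_ege1].
set e := mpol (cut1 c i).
set h := mpol (cut2 c i).
have sub_lem : forall S : {set 'I_n}, i \notin S -> S \subset [set k in i :: s] -> S \subset [set k in s].
  move=> S iS /subsetP H; apply/subsetP => k kS; have := H k kS; rewrite !inE.
  by case/orP => // /eqP ki; move: iS; rewrite -ki kS.
have IH1 : prod_expect a p (fun y => e y ^+ 4) <= K ^+ d * prod_expect a p (fun y => e y ^+ 2) ^+ 2.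
  apply: IH.
    move=> S HS; rewrite /cut1; case: ifP => // /negbT iS; apply: hsub.
    by apply: contra HS; apply: sub_lem.
  by move=> S HS; rewrite /cut1; case: ifP => // _; apply: hdeg.
have IH2 : prod_expect a p (fun y => h y ^+ 4) <= K ^+ d.-1 * prod_expect a p (fun y => h y ^+ 2) ^+ 2.
  apply: IH.
    move=> S HS; rewrite /cut2; case: ifP => // /negbT iS; apply: hsub.
    apply: contra HS => H; apply: (sub_lem _ iS); apply: subset_trans H.
    by apply/subsetP => k kS; rewrite !inE kS orbT.
  move=> S HS; rewrite /cut2; case: ifP => // /negbT iS; apply: hdeg.
  rewrite cardsU1 iS /= add1n; move: HS; set z := #|S|; move=> HS; lia.
have F4 : prod_expect a p (fun y => mpol c y ^+ 4) <=
   prod_expect a p (fun y => e y ^+ 4) + 8 * prod_expect a p (fun y => e y ^+ 2 * h y ^+ 2)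
   + 3 * (\sum_(j < m) p j * a j ^+ 4) * prod_expect a p (fun y => h y ^+ 4).
  rewrite (PE_cond _ _ i ps).
  under eq_bigr do rewrite (PE_ext _ _ (fun y => congr1 (fun z => z ^+ 4) (mpol_upd _ _ _ _))) -PE_scale.
  rewrite -PE_sum -PE_scale -PE_scale -PE_add -PE_add.
  apply: PE_le => // y; exact: pt4.
have F2 : prod_expect a p (fun y => mpol c y ^+ 2) =
   prod_expect a p (fun y => e y ^+ 2) + prod_expect a p (fun y => h y ^+ 2).
  rewrite (PE_cond _ _ i ps).
  under eq_bigr do rewrite (PE_ext _ _ (fun y => congr1 (fun z => z ^+ 2) (mpol_upd _ _ _ _))) -PE_scale.
  rewrite -PE_sum -PE_add.
  apply: PE_ext => y; exact: pt2.
have CS : prod_expect a p (fun y => e y ^+ 2 * h y ^+ 2) ^+ 2 <=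
   prod_expect a p (fun y => e y ^+ 4) * prod_expect a p (fun y => h y ^+ 4).
  have := PE_CS a p0 (fun y => e y ^+ 2) (fun y => h y ^+ 2).
  by rewrite (PE_ext _ _ (fun y => esym (exprM (e y) 2 2))) (PE_ext _ _ (fun y => esym (exprM (h y) 2 2))).
rewrite F2.
set A := prod_expect a p (fun y => e y ^+ 2) in IH1 F4 CS *.
set H := prod_expect a p (fun y => h y ^+ 2) in IH2 F4 CS *.
set A4 := prod_expect a p (fun y => e y ^+ 4) in IH1 F4 CS *.
set H4 := prod_expect a p (fun y => h y ^+ 4) in IH2 F4 CS *.
set X := prod_expect a p (fun y => e y ^+ 2 * h y ^+ 2) in F4 CS *.
set B := \sum_(j < m) p j * a j ^+ 4 in KB F4.
have A0 : 0 <= A by apply: PE_ge0 => // y; apply: sqr_ge0.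
have H0 : 0 <= H by apply: PE_ge0 => // y; apply: sqr_ge0.
have X0 : 0 <= X by apply: PE_ge0 => // y; apply: mulr_ge0; apply: sqr_ge0.
have H40 : 0 <= H4 by apply: PE_ge0 => // y; apply: exprn_even_ge0.
have B0 : 0 <= B by apply: sumr_ge0 => j _; apply: mulr_ge0 => //; apply: exprn_even_ge0.
apply: (le_trans F4).
case: d hdeg IH1 IH2 => [|d] hdeg IH1 IH2.
  have h0 : forall y, h y = 0.
    move=> y; rewrite /h /mpol; apply: big1 => S _; rewrite /cut2; case: ifP => [_|/negbT iS]; first by rewrite mul0r.
    by rewrite hdeg ?mul0r // cardsU1 iS.
  have HH : H = 0 by rewrite /H (PE_ext _ _ (fun y => congr1 (fun z => z ^+ 2) (h0 y))) PE_const // expr0n.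
  have HH4 : H4 = 0 by rewrite /H4 (PE_ext _ _ (fun y => congr1 (fun z => z ^+ 4) (h0 y))) PE_const // expr0n.
  have XX : X = 0.
    rewrite /X -(PE_const n a (0 : R) ps); apply: PE_ext => y; by rewrite h0 expr0n mulr0.
  rewrite HH HH4 XX; rewrite expr0 mul1r in IH1 *; lra.
rewrite /= in IH2.
set Q := K ^+ d in IH2 *.
have Q1 : 1 <= Q by apply: exprn_ege1.
have -> : K ^+ d.+1 = K * Q by rewrite exprS.
rewrite exprS in IH1; rewrite -/Q in IH1.
have XB : X ^+ 2 <= (K * Q * A * H / 4) ^+ 2.
  apply: (le_trans CS).
  have A40 : 0 <= A4 by apply: PE_ge0 => // y; apply: exprn_even_ge0.
  apply: (le_trans (ler_pM A40 H40 IH1 IH2)).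
  have -> : (K * Q * A * H / 4) ^+ 2 = K * (K / 16%:R) * (Q * Q * A ^+ 2 * H ^+ 2) by field.
  have -> : K * Q * A ^+ 2 * (Q * H ^+ 2) = K * 1 * (Q * Q * A ^+ 2 * H ^+ 2) by ring.
  apply: ler_wpM2r; first by apply: mulr_ge0; [apply: mulr_ge0|]; (try apply: mulr_ge0); nra.
  apply: ler_wpM2l; lra.
have XB' : X <= K * Q * A * H / 4.
  have Y0 : 0 <= K * Q * A * H / 4 by apply: divr_ge0 => //; apply: mulr_ge0 => //; apply: mulr_ge0 => //; apply: mulr_ge0; lra.
  by rewrite -(ler_pXn2r (n := 2)) // ?nnegrE.
have T3 : 3 * B * H4 <= K * Q * H ^+ 2.
  apply: (le_trans (ler_wpM2l _ IH2)); first by lra.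
  rewrite mulrA; apply: ler_wpM2r; first by apply: sqr_ge0.
  apply: ler_wpM2r; lra.
have KQA : 0 <= K * Q * A * H by apply: mulr_ge0 => //; apply: mulr_ge0 => //; apply: mulr_ge0; lra.
have -> : K * Q * (A + H) ^+ 2 = K * Q * A ^+ 2 + 2 * (K * Q * A * H) + K * Q * H ^+ 2 by ring.
lra.
Qed.

Unset Implicit Arguments. Set Strict Implicit.
Theorem corollary4p7 (R : realType) (m : nat) (a p : 'I_m -> R)
  (a_inj : injective a)
  (p_pos : forall i, 0 < p i)
  (p_sum : \sum_(i < m) p i = 1)
  (mean0 : rv_mean a p = 0)
  (var1 : rv_var a p = 1)
  (lam : R) (lam_le : forall i, lam <= p i) (lam_att : exists i, p i = lam)
  (n d : nat) (d_ge1 : (1 <= d)%N)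
  (f : ('I_n -> R) -> R)
  (f_ml : multilinear_deg_le d f)
  (f_norm : L2norm a p f = 1) :
  let t0 := (2 * expR 1 / lam) ^+ d in
  prod_expect a p (fun x => if t0 < `|f x| then f x ^+ 2 else 0)
    <= 52%:R / 100%:R.
Proof.
cbv zeta; set t0 := (2 * expR 1 / lam) ^+ d.
have p0 : forall i, 0 <= p i by move=> i; apply: ltW.
have m0 : \sum_(j < m) p j * a j = 0 by [].
have m2 : \sum_(j < m) p j * a j ^+ 2 = 1.
  by move: var1; rewrite /rv_var mean0; under eq_bigr do rewrite subr0.
case: lam_att => i0 hi0.
have lam0 : 0 < lam by rewrite -hi0.
have pa_le1 : forall j, p j * a j ^+ 2 <= 1.
  move=> j; rewrite -m2 (bigD1 j) //= lerDl; apply: sumr_ge0 => k _.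
  by apply: mulr_ge0 => //; apply: sqr_ge0.
have a2 : forall j, lam * a j ^+ 2 <= 1.
  move=> j; apply: le_trans (pa_le1 j); apply: ler_wpM2r => //; apply: sqr_ge0.
have Bb : \sum_(j < m) p j * a j ^+ 4 <= 1 / lam.
  rewrite -m2 mulr_suml; apply: ler_sum => j _; rewrite ler_pdivlMr //.
  have h1 := a2 j; have h2 : 0 <= p j * a j ^+ 2 by apply: mulr_ge0 => //; apply: sqr_ge0.
  have -> : p j * a j ^+ 4 * lam = (p j * a j ^+ 2) * (lam * a j ^+ 2) by ring.
  by rewrite -[X in _ <= X]mulr1; apply: ler_wpM2l.
have lam_half : lam * 2 <= 1.
  case: (boolP [exists j, j != i0]) => [/existsP [j ji]|].
    have : p i0 + p j <= 1.
      rewrite -p_sum (bigD1 i0) //= (bigD1 j) //= addrA lerDl.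
      by apply: sumr_ge0 => k _.
    have := lam_le j; rewrite hi0; lra.
  rewrite negb_exists => /forallP H.
  have Hs : forall F : 'I_m -> R, \sum_(j < m) F j = F i0.
    move=> F; rewrite (bigD1 i0) //= big1 ?addr0 // => j ji.
    by have := H j; rewrite ji.
  move: m2 p_sum; rewrite !Hs => m2' ps'.
  move: m0; rewrite Hs ps' mul1r => ha.
  by move: m2'; rewrite ps' ha mul1r expr0n /= => /eqP; rewrite eq_sym oner_eq0.
have K16 : 16%:R <= 16%:R / lam.
  rewrite ler_pdivlMr //; have : lam <= 1 by lra.
  move=> h; rewrite -[X in _ <= X]mulr1; apply: ler_wpM2l => //.
have KB : 3 * \sum_(j < m) p j * a j ^+ 4 <= 16%:R / lam.
  apply: (le_trans (ler_wpM2l _ Bb)) => //.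
  rewrite mulrA mulr1 ler_pM2r ?invr_gt0 //; lra.
case: f_ml => c [cdeg cf].
have hsub : forall S : {set 'I_n}, ~~ (S \subset [set k in enum 'I_n]) -> c S = 0.
  by move=> S /negP []; apply/subsetP => k _; rewrite inE mem_enum.
have HH := hyper p0 p_sum m0 m2 K16 KB hsub cdeg.
rewrite -(PE_ext _ _ (fun y => congr1 (fun z => z ^+ 4) (cf y))) in HH.
rewrite -(PE_ext _ _ (fun y => congr1 (fun z => z ^+ 2) (cf y))) in HH.
have f2 : prod_expect a p (fun x => f x ^+ 2) = 1.
  have E0 : 0 <= prod_expect a p (fun x => f x ^+ 2) by apply: PE_ge0 => // y; apply: sqr_ge0.
  by rewrite -(sqr_sqrtr E0); move: f_norm; rewrite /L2norm => ->; rewrite expr1n.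
rewrite f2 expr1n mulr1 in HH.
have e2 : 2 <= expR 1 :> R by have := expR_ge1Dx (1 : R); lra.
have t0p : 0 < t0 by apply: exprn_gt0; apply: divr_gt0 => //; lra.
apply: (le_trans (y := prod_expect a p (fun x => (t0 ^+ 2)^-1 * f x ^+ 4))).
  apply: PE_le => // y; set u := `|f y|.
  have hu : f y ^+ 2 = u ^+ 2 by rewrite /u real_normK ?num_real.
  have hu4 : f y ^+ 4 = u ^+ 2 * u ^+ 2 by rewrite -hu -exprD.
  have ti : 0 < (t0 ^+ 2)^-1 by rewrite invr_gt0 exprn_gt0.
  case: ifP => Ht.
    have t02 : 0 < t0 ^+ 2 by apply: exprn_gt0.
    rewrite hu hu4 mulrC ler_pdivlMr //.
    have u0 : 0 <= u by apply: normr_ge0.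
    apply: ler_wpM2l; first by apply: sqr_ge0.
    rewrite -subr_ge0 subr_sqr; apply: mulr_ge0; lra.
  by apply: mulr_ge0; [apply: ltW|rewrite hu4; apply: mulr_ge0; apply: sqr_ge0].
rewrite PE_scale.
apply: (le_trans (ler_wpM2l _ HH)); first by rewrite invr_ge0 ltW // exprn_gt0.
have -> : t0 ^- 2 * (16%:R / lam) ^+ d = ((2 * expR 1 / lam) ^- 2 * (16%:R / lam)) ^+ d.
  by rewrite [RHS]exprMn exprVn -exprM mulnC exprM.
have eg0 : 0 < expR 1 :> R by lra.
have -> : (2 * expR 1 / lam) ^- 2 * (16%:R / lam) = 4 * lam / expR 1 ^+ 2.
  by field; apply/andP; split; apply: lt0r_neq0.
set r := 4 * lam / expR 1 ^+ 2.
have r0 : 0 <= r by apply: divr_ge0; [lra| apply: sqr_ge0].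
have rh : r <= 1 / 2.
  rewrite /r ler_pdivrMr ?exprn_gt0 //; nra.
case: d d_ge1 {t0 t0p HH cdeg} => // d _.
rewrite exprS; apply: (@le_trans _ _ (r * 1)).
  by apply: ler_wpM2l => //; apply: exprn_ile1; lra.
rewrite mulr1; apply: (le_trans rh); lra.
Qed.
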